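(* Let $m,n,d$ be positive integers and let $w_1,w_2$ be positive integers with $w_1\mid w_2$ and $w_2\mid m$. Then $$A\left(m\frac{w_1}{w_2},\,n\frac{w_2}{w_1},\,w_1,\,d\right)\ge\left\lceil\frac{\binom{m w_1/w_2}{w_1}^{n w_2/w_1}}{\binom{m}{w_2}^n}A(m,n,w_2,d)\right\rceil.$$ Consequently, for all positive integers $m,n,w,d$ with $w\mid m$, $$\frac{\binom{m}{w}^n}{\binom{mn}{wn}}B(mn,nw,d)\le A(m,n,w,d)\le\frac{\binom{m}{w}^n}{\left(\frac{m}{w}\right)^{nw}}C\left(\frac{m}{w},nw,d\right).$$
   Context: $J(m,w)$ denotes the set of binary vectors of length $m$ and Hamming weight $w$. Elements of $J(m,w)^n$ are identified with $m\times n$ binary matrices all of whose columns have weight $w$, with binary Hamming distance. $A(m,n,w,d)$ is the maximum cardinality of a nonempty subset of $J(m,w)^n$ with pairwise Hamming distances at least $2d$. $B(N,W,d)$ is the maximum cardinality of a nonempty subset of $J(N,W)$ with pairwise Hamming distances at least $2d$. $C(q,n,d)$ is the maximum cardinality of a nonempty subset of $[q]^n$, $[q]=\{0,\dots,q-1\}$, with pairwise Hamming distances (number of differing coordinates) at least $d$. *)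

(* Defs.v *)
From HB Require Import structures.
From mathcomp Require Import all_boot all_order all_algebra.
Set Implicit Arguments. Unset Strict Implicit. Unset Printing Implicit Defensive.
Import Order.TTheory GRing.Theory Num.Theory.

(* Elements of J(m,w)^n are m x n binary matrices whose columns all have weight w.
   Matrix entry M i j : i = row in 'I_m, j = column in 'I_n. *)

Definition col_weight (m n : nat) (M : 'M[bool]_(m, n)) (j : 'I_n) : nat :=
  #|[set i : 'I_m | M i j]|.

Definition mx_dist (m n : nat) (M N : 'M[bool]_(m, n)) : nat :=
  #|[set p : 'I_m * 'I_n | M p.1 p.2 != N p.1 p.2]|.

Definition validA (m n w d : nat) (S : {set 'M[bool]_(m, n)}) : bool :=
  [&& S != set0,
      [forall M in S, forall j : 'I_n, col_weight M j == w] &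
      [forall M in S, forall N in S, (M != N) ==> (2 * d <= mx_dist M N)]].

Definition A (m n w d : nat) : nat :=
  \max_(S : {set 'M[bool]_(m, n)} | validA w d S) #|S|.

Definition vweight (N : nat) (x : {ffun 'I_N -> bool}) : nat := #|[set i | x i]|.

Definition bdist (N : nat) (x y : {ffun 'I_N -> bool}) : nat :=
  #|[set i | x i != y i]|.

Definition validB (N W d : nat) (S : {set {ffun 'I_N -> bool}}) : bool :=
  [&& S != set0,
      [forall x in S, vweight x == W] &
      [forall x in S, forall y in S, (x != y) ==> (2 * d <= bdist x y)]].

Definition B (N W d : nat) : nat :=
  \max_(S : {set {ffun 'I_N -> bool}} | validB W d S) #|S|.

Definition qdist (q n : nat) (x y : {ffun 'I_n -> 'I_q}) : nat :=
  #|[set i | x i != y i]|.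

Definition validC (q n d : nat) (S : {set {ffun 'I_n -> 'I_q}}) : bool :=
  (S != set0) && [forall x in S, forall y in S, (x != y) ==> (d <= qdist x y)].

Definition C (q n d : nat) : nat :=
  \max_(S : {set {ffun 'I_n -> 'I_q}} | validC d S) #|S|.

(* Main.v *)
Require Import Defs.
From mathcomp Require Import all_boot all_order all_algebra all_fingroup.
Import Order.TTheory GRing.Theory Num.Theory.
Set Implicit Arguments. Unset Strict Implicit. Unset Printing Implicit Defensive.

Definition ip a b (x : 'I_a) (y : 'I_b) : 'I_(a*b) := mxvec_index x y.
Definition up a b (z : 'I_(a*b)) : 'I_a * 'I_b :=
  enum_val (cast_ord (esym (mxvec_cast a b)) z).

Lemma upK a b (x : 'I_a) (y : 'I_b) : up (ip x y) = (x, y).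
Proof. by rewrite /up /ip /mxvec_index cast_ordK enum_rankK. Qed.

Lemma ipK a b (z : 'I_(a*b)) : ip (up z).1 (up z).2 = z.
Proof. by case/mxvec_indexP: z => i j; rewrite upK. Qed.

Lemma card_bij (X Y : finType) (f : X -> Y) (g : Y -> X) (R : {pred Y}) :
  cancel f g -> cancel g f -> #|[set x | f x \in R]| = #|R|.
Proof.
move=> fK gK; have := @on_card_preimset X Y f R.
by apply; exists g; apply: in1W.
Qed.

Lemma cardS_sum (T : finType) (A : {set T}) (Q : pred T) :
  #|[set x in A | Q x]| = \sum_(x in A) (Q x : nat).
Proof.
rewrite -sum1_card big_mkcond /= [RHS]big_mkcond /=.
by apply: eq_bigr => x _; rewrite !inE; case: (x \in A); case: (Q x).
Qed.

Lemma cardT_sum (T : finType) (Q : pred T) :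
  #|[set x | Q x]| = \sum_x (Q x : nat).
Proof.
rewrite -sum1_card big_mkcond /=.
by apply: eq_bigr => x _; rewrite !inE; case: (Q x).
Qed.

Lemma card_pair (I J : finType) (F : I -> J -> bool) :
  #|[set p : I * J | F p.1 p.2]| = \sum_i #|[set j | F i j]|.
Proof.
rewrite cardT_sum -(pair_big predT predT (fun i j => (F i j : nat))) /=.
by apply: eq_bigr => i _; rewrite cardT_sum.
Qed.

Lemma perm_settr (T : finType) (A B : {set T}) :
  #|A| = #|B| -> exists t : {perm T}, t @: A = B.
Proof.
have [k hk] : exists k, #|A :\: B| <= k by exists #|A :\: B|.
elim: k A hk => [|k IH] A hk hc.
  have sAB : A \subset B by rewrite -setD_eq0 -cards_eq0 -leqn0.
  have AB : A = B by apply/eqP; rewrite eqEcard sAB hc leqnn.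
  by exists 1%g; rewrite AB imset_perm1.
case: (boolP (A \subset B)) => sAB.
  have AB : A = B by apply/eqP; rewrite eqEcard sAB hc leqnn.
  by exists 1%g; rewrite AB imset_perm1.
have sBA : ~~ (B \subset A).
  apply/negP => sBA; move: sAB; have AB : B = A by apply/eqP; rewrite eqEcard sBA hc leqnn.
  by rewrite AB subxx.
case/subsetPn: sAB => a aA aB.
case/subsetPn: sBA => b bB bA.
set A' := tperm a b @: A.
have mA' x : (x \in A') = (tperm a b x \in A).
  by rewrite /A' -[in LHS](tpermK a b x) mem_imset //; apply: perm_inj.
have cA' : #|A'| = #|B| by rewrite card_imset //; apply: perm_inj.
have prop : A' :\: B \proper A :\: B.
  apply/properP; split.
    apply/subsetP => x; rewrite !inE mA' => /andP [xB].
    case: tpermP => [e|e|_ _ ->]; last by rewrite xB.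
      by subst x; rewrite (negbTE bA).
    by subst x; rewrite bB in xB.
  exists a; first by rewrite !inE aA aB.
  by rewrite !inE mA' tpermL (negbTE bA) andbF.
have := proper_card prop => lt.
have [t ht] := IH A' (leq_trans lt hk) cA'.
exists (tperm a b * t)%g.
by rewrite -ht /A' -imset_comp; apply: eq_imset => x /=; rewrite permM.
Qed.


Lemma avg (G X : finType) (act : X -> G -> X) (mul : G -> G -> G)
  (J S P : {set X}) (g0 : G) :
  (forall x g t, act x (mul g t) = act (act x g) t) ->
  (forall t, injective (mul^~ t)) ->
  (forall x g, x \in J -> act x g \in J) ->
  (forall y y', y \in J -> y' \in J -> exists t, act y t = y') ->
  S \subset J -> P \subset J ->
  exists g, #|S| * #|P| <= #|[set x in S | act x g \in P]| * #|J|.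
Proof.
move=> actM mulI actJ trJ sSJ sPJ.
pose N x y := #|[set g | act x g == y]|.
have Nle x y y' : y \in J -> y' \in J -> N x y <= N x y'.
  move=> yJ y'J; have [t ht] := trJ y y' yJ y'J.
  rewrite /N -(card_imset _ (mulI t)); apply: subset_leq_card.
  apply/subsetP => g' /imsetP [g]; rewrite inE => /eqP hg ->.
  by rewrite inE actM hg ht.
have Neq x y : y \in J -> x \in J -> N x y = N x x.
  by move=> yJ xJ; apply/eqP; rewrite eqn_leq !Nle.
have NG x : x \in J -> #|J| * N x x = #|G|.
  move=> xJ; rewrite -[RHS]sum1_card (partition_big (act x) (fun y => y \in J)) /=; last first.
    by move=> g _; apply: actJ.
  rewrite -sum_nat_const; apply: eq_bigr => y yJ.
  rewrite -(Neq x y yJ xJ) /N -sum1_card; apply: eq_bigl => g; by rewrite inE.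
have NP x : x \in J -> #|[set g | act x g \in P]| = #|P| * N x x.
  move=> xJ; rewrite -[LHS]sum1_card (partition_big (act x) (fun y => y \in P)) /=; last first.
    by move=> g; rewrite inE.
  rewrite -sum_nat_const; apply: eq_bigr => y yP.
  rewrite -(Neq x y (subsetP sPJ y yP) xJ) /N -sum1_card; apply: eq_bigl => g.
  rewrite !inE; case: eqP => [->|]; by rewrite ?yP ?andbF.
pose cnt g := #|[set x in S | act x g \in P]|.
have tot : \sum_g cnt g * #|J| = #|S| * #|P| * #|G|.
  rewrite -big_distrl /=.
  have -> : \sum_g cnt g = \sum_(x in S) #|[set g | act x g \in P]|.
    have E g : cnt g = \sum_(x in S) (act x g \in P : nat) by rewrite /cnt cardS_sum.
    rewrite (eq_bigr _ (fun g _ => E g)).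
    rewrite exchange_big /=; apply: eq_bigr => x xS.
    by rewrite cardT_sum.
  rewrite big_distrl /= -mulnA -sum_nat_const; apply: eq_bigr => x xS.
  have xJ := subsetP sSJ x xS.
  by rewrite NP // -mulnA [N x x * _]mulnC NG.
have G0 : 0 < #|G| by apply/card_gt0P; exists g0.
have [gm hgm] := @bigop.eq_bigmax G cnt G0.
exists gm; rewrite -/(cnt gm) -hgm.
rewrite -(leq_pmul2r G0); rewrite -tot.
rewrite mulnC -sum_nat_const; apply: leq_sum => g _.
by rewrite leq_mul2r bigop.leq_bigmax orbT.
Qed.


Lemma dist_cells a b a' b' (M N : 'M[bool]_(a,b)) (M' N' : 'M[bool]_(a',b'))
  (h : 'I_a' * 'I_b' -> 'I_a * 'I_b) (h' : 'I_a * 'I_b -> 'I_a' * 'I_b') :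
  cancel h h' -> cancel h' h ->
  (forall p, M' p.1 p.2 = M (h p).1 (h p).2) ->
  (forall p, N' p.1 p.2 = N (h p).1 (h p).2) ->
  mx_dist M' N' = mx_dist M N.
Proof.
move=> hK h'K eM eN; rewrite /mx_dist.
rewrite -(@card_bij _ _ h h' (mem [set q : 'I_a * 'I_b | M q.1 q.2 != N q.1 q.2]) hK h'K).
by apply: eq_card => p; rewrite !inE eM eN.
Qed.

Lemma dist0 a b (M N : 'M[bool]_(a,b)) : mx_dist M N = 0 -> M = N.
Proof.
move/eqP; rewrite cards_eq0 => /eqP E; apply/matrixP => i j.
by apply/eqP/negPn/negP => h; move/setP: E => /(_ (i, j)); rewrite !inE h.
Qed.

Lemma wcount (I : finType) k :
  #|[set x : {ffun I -> bool} | #|[set i | x i]| == k]| = 'C(#|I|, k).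
Proof.
rewrite -card_draws.
have := @card_bij _ _ (fun x : {ffun I -> bool} => [set i | x i])
   (fun A : {set I} => [ffun i => i \in A])
   (mem [set A : {set I} | #|A| == k]).
rewrite -/(is_true _); move=> <- //.
- by apply: eq_card => x; rewrite !inE.
- by move=> x; apply/ffunP => i; rewrite ffunE inE.
- by move=> A; apply/setP => i; rewrite inE ffunE.
Qed.

Lemma cols_card a b (Q : {set {ffun 'I_a -> bool}}) :
  #|[set M : 'M[bool]_(a,b) | [forall j, [ffun i => M i j] \in Q]]| = #|Q| ^ b.
Proof.
have := @card_bij _ _ (fun M : 'M[bool]_(a,b) => [ffun j => [ffun i => M i j]])
   (fun F : {ffun 'I_b -> {ffun 'I_a -> bool}} => (\matrix_(i,j) F j i)%R)
   (ffun_on Q).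
rewrite card_ffun_on card_ord => <-.
- apply: eq_card => M; rewrite !inE; apply/forallP/ffun_onP => H j.
    by rewrite ffunE H.
  by have := H j; rewrite ffunE.
- by move=> M; apply/matrixP => i j; rewrite mxE !ffunE.
- by move=> F; apply/ffunP => j; apply/ffunP => i; rewrite !ffunE mxE.
Qed.

Lemma blk_card k m' (Q : {set {ffun 'I_m' -> bool}}) :
  #|[set c : {ffun 'I_(k * m') -> bool} | [forall b, [ffun r => c (ip b r)] \in Q]]|
  = #|Q| ^ k.
Proof.
have := @card_bij _ _ (fun c : {ffun 'I_(k * m') -> bool} => [ffun b => [ffun r => c (ip b r)]])
   (fun F : {ffun 'I_k -> {ffun 'I_m' -> bool}} => [ffun i => F (up i).1 (up i).2])
   (ffun_on Q).
rewrite card_ffun_on card_ord => <-.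
- apply: eq_card => M; rewrite !inE; apply/forallP/ffun_onP => H j.
    by rewrite ffunE H.
  by have := H j; rewrite ffunE.
- by move=> c; apply/ffunP => i; rewrite !ffunE ipK.
- by move=> F; apply/ffunP => j; apply/ffunP => i; rewrite !ffunE upK.
Qed.


Lemma dist_refl a b (M : 'M[bool]_(a,b)) : mx_dist M M = 0.
Proof. by apply/eqP; rewrite cards_eq0; apply/eqP/setP => p; rewrite !inE eqxx. Qed.

Definition cact K n (M : 'M[bool]_(K,n)) (g : {ffun 'I_n -> {perm 'I_K}}) : 'M[bool]_(K,n) :=
  (\matrix_(i,j) M (g j i) j)%R.

Definition psi k m' n (M : 'M[bool]_(k * m', n)) : 'M[bool]_(m', n * k) :=
  (\matrix_(r, c) M (ip (up c).2 r) (up c).1)%R.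

Lemma cact_dist K n (M N : 'M[bool]_(K,n)) g : mx_dist (cact M g) (cact N g) = mx_dist M N.
Proof.
apply: (@dist_cells _ _ _ _ M N _ _ (fun p => (g p.2 p.1, p.2)) (fun p => ((g p.2)^-1%g p.1, p.2))).
- by case=> i j /=; rewrite permK.
- by case=> i j /=; rewrite permKV.
- by case=> i j; rewrite mxE.
- by case=> i j; rewrite mxE.
Qed.

Lemma psi_dist k m' n (M N : 'M[bool]_(k * m', n)) : mx_dist (psi M) (psi N) = mx_dist M N.
Proof.
apply: (@dist_cells _ _ _ _ M N _ _ (fun p : 'I_m' * 'I_(n * k) => (ip (up p.2).2 p.1, (up p.2).1))
   (fun p : 'I_(k * m') * 'I_n => ((up p.1).2, ip p.2 (up p.1).1))).
- by case=> r c /=; rewrite upK /= ipK.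
- by case=> i j /=; rewrite upK /= ipK.
- by case=> i j; rewrite mxE.
- by case=> i j; rewrite mxE.
Qed.

Lemma col_weight_cact K n (M : 'M[bool]_(K,n)) g j : col_weight (cact M g) j = col_weight M j.
Proof.
rewrite /col_weight -(@card_bij _ _ (g j) (g j)^-1%g (mem [set i | M i j]) (permK _) (permKV _)).
by apply: eq_card => i; rewrite !inE mxE.
Qed.


Lemma L1_set m' k n w1 d (S : {set 'M[bool]_(k * m', n)}) :
  validA (k * w1) d S ->
  'C(m', w1) ^ (n * k) * #|S| <= A m' (n * k) w1 d * 'C(k * m', k * w1) ^ n.
Proof.
case/and3P => _ /forall_inP wS /forall_inP dS.
pose mul (g t : {ffun 'I_n -> {perm 'I_(k * m')}}) : {ffun 'I_n -> {perm 'I_(k * m')}} := [ffun j => (t j * g j)%g].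
pose J := [set M : 'M[bool]_(k * m', n) | [forall j, col_weight M j == k * w1]].
pose Qw1 := [set x : {ffun 'I_m' -> bool} | #|[set i | x i]| == w1].
pose Qb := [set c : {ffun 'I_(k * m') -> bool} | [forall b, [ffun r => c (ip b r)] \in Qw1]].
pose P := [set M : 'M[bool]_(k * m', n) | [forall j, [ffun i => M i j] \in Qb]].
have cJ : #|J| = 'C(k * m', k * w1) ^ n.
  have := wcount 'I_(k * m') (k * w1); rewrite card_ord => <-.
  rewrite -cols_card; apply: eq_card => M.
  rewrite !inE; apply: eq_forallb => j; rewrite inE /col_weight.
  by congr (_ == _); apply: eq_card => i; rewrite !inE ffunE.
have cP : #|P| = 'C(m', w1) ^ (n * k).
  rewrite cols_card blk_card wcount card_ord -expnM mulnC.
  done.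
have sPJ : P \subset J.
  apply/subsetP => M; rewrite !inE => /forallP PM; apply/forallP => j.
  move: (PM j); rewrite inE => /forallP Pj.
  rewrite /col_weight.
  have -> : #|[set i | M i j]| = #|[set p : 'I_k * 'I_m' | M (ip p.1 p.2) j]|.
    rewrite -(@card_bij _ _ (fun p : 'I_k * 'I_m' => ip p.1 p.2) (@up _ _) (mem [set i | M i j])).
    - by apply: eq_card => p; rewrite !inE.
    - by case=> b r /=; rewrite upK.
    - by move=> i /=; rewrite ipK.
  rewrite (card_pair (fun (b : 'I_k) (r : 'I_m') => M (ip b r) j)) (eq_bigr (fun _ => w1)).
    by rewrite sum_nat_const card_ord mulnC.
  move=> b _; move: (Pj b); rewrite inE => /eqP <-.
  by apply: eq_card => r; rewrite !inE !ffunE.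
have sSJ : S \subset J by apply/subsetP => M MS; rewrite inE; exact: wS.
have [g hg] : exists g : {ffun 'I_n -> {perm 'I_(k * m')}}, #|S| * #|P| <= #|[set x in S | cact x g \in P]| * #|J|.
  apply: (@avg _ _ (@cact _ _) mul J S P [ffun => 1%g]) => //.
  - by move=> x g t; apply/matrixP => i j; rewrite !mxE ffunE permM.
  - move=> t g1 g2 /ffunP E; apply/ffunP => j; move: (E j); rewrite !ffunE.
    exact: mulgI.
  - move=> x g; rewrite !inE => /forallP H; apply/forallP => j.
    by rewrite col_weight_cact H.
  - move=> y y'; rewrite !inE => /forallP Hy /forallP Hy'.
    have hc j : #|[set i | y' i j]| = #|[set i | y i j]|.
      by move: (Hy j) (Hy' j); rewrite /col_weight => /eqP -> /eqP ->.
    have ex j := perm_settr (hc j).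
    have [t Ht] := fin_all_exists ex.
    exists [ffun j => t j]; apply/matrixP => i j; rewrite mxE ffunE.
    have := Ht j => /setP /(_ (t j i)); rewrite mem_imset; last exact: perm_inj.
    by rewrite !inE => ->.
set S2 := [set x in S | cact x g \in P].
pose T := [set psi (cact x g) | x in S2].
have injT : injective (fun x => psi (cact x g)).
  move=> x y /= E; apply: dist0.
  by rewrite -(cact_dist x y g) -psi_dist E dist_refl.
have cT : #|T| = #|S2| by rewrite card_imset.
rewrite -cP mulnC; apply: (leq_trans hg); rewrite cJ leq_mul2r -cT.
case: (boolP (T == set0)) => [/eqP -> | T0]; first by rewrite cards0 orbT.
apply/orP; right.
rewrite /A; apply: (@bigop.leq_bigmax_cond _ (fun U => validA w1 d U) (fun U => #|U|) T).
apply/and3P; split => //.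
- apply/forall_inP => M /imsetP [x xS2 ->]; apply/forallP => c.
  move: xS2; rewrite inE => /andP [_]; rewrite inE => /forallP /(_ (up c).1).
  rewrite inE => /forallP /(_ (up c).2); rewrite inE => /eqP <-.
  by rewrite /col_weight; apply/eqP; apply: eq_card => r; rewrite !(inE, mxE, ffunE).
- apply/forall_inP => M /imsetP [x xS2 ->]; apply/forall_inP => N /imsetP [y yS2 ->].
  apply/implyP => neq; rewrite psi_dist cact_dist.
  move: xS2 yS2; rewrite !inE => /andP [xS _] /andP [yS _].
  have := dS x xS => /forall_inP /(_ y yS) /implyP; apply.
  by apply: contraNneq neq => ->.
Qed.


Lemma L1 m' k n w1 d :
  'C(m', w1) ^ (n * k) * A (k * m') n (k * w1) d
  <= A m' (n * k) w1 d * 'C(k * m', k * w1) ^ n.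
Proof.
set R := A m' _ _ _ * _; rewrite /A.
apply: (@big_ind nat (fun x => 'C(m', w1) ^ (n * k) * x <= R) 0 maxn).
- by rewrite muln0.
- by move=> x y hx hy; case: (leqP x y).
- by move=> S vS; apply: L1_set.
Qed.

Lemma L2 N W d : B N W d <= A N 1 W d.
Proof.
rewrite /B; apply/bigop.bigmax_leqP => S vS.
case/and3P: vS => S0 /forall_inP wS /forall_inP dS.
pose colm (v : {ffun 'I_N -> bool}) : 'M[bool]_(N, 1) := (\matrix_(i, j) v i)%R.
have dc u v : mx_dist (colm u) (colm v) = bdist u v.
  rewrite /mx_dist /bdist.
  rewrite -(@card_bij _ _ (fun p : 'I_N * 'I_1 => p.1) (fun i => (i, ord0)) (mem [set i | u i != v i])).
  - by apply: eq_card => p; rewrite !inE !mxE.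
  - by case=> i j /=; rewrite (ord1 j).
  - by [].
have injc : injective colm.
  by move=> u v E; apply/ffunP => i; move/matrixP: E => /(_ i ord0); rewrite !mxE.
rewrite -(card_imset _ injc).
rewrite /A; apply: (@bigop.leq_bigmax_cond _ (fun U => validA W d U) (fun U => #|U|)).
apply/and3P; split.
- case/set0Pn: S0 => v vS; apply/set0Pn; exists (colm v); exact: imset_f.
- apply/forall_inP => M /imsetP [v vS ->]; apply/forallP => j.
  have := wS v vS; rewrite /vweight /col_weight => /eqP <-.
  by apply/eqP; apply: eq_card => i; rewrite !inE mxE.
- apply/forall_inP => M /imsetP [u uS ->]; apply/forall_inP => M' /imsetP [v vS ->].
  apply/implyP => neq; rewrite dc.
  have := dS u uS => /forall_inP /(_ v vS) /implyP; apply.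
  by apply: contraNneq neq => ->.
Qed.

Lemma sum_ne q (a b : 'I_q) : \sum_i (((i == a) != (i == b)) : nat) = 2 * (a != b).
Proof.
case: (eqVneq a b) => [<- | ne].
  by rewrite big1 // => i _; rewrite eqxx.
have nba : (b == a) = false by rewrite eq_sym (negbTE ne).
rewrite (bigD1 a) // (bigD1 b) /=; last by rewrite nba.
rewrite big1; last by move=> i /andP [ia ib]; rewrite (negbTE ia) (negbTE ib).
by rewrite !eqxx (negbTE ne) nba.
Qed.

Lemma colw1 q N (M : 'M[bool]_(q, N)) (i0 : 'I_q) j :
  col_weight M j = 1 -> forall i, M i j = (i == odflt i0 [pick i | M i j]).
Proof.
move/eqP/cards1P => [x Ex].
have Mx i : M i j = (i == x).
  by move/setP: Ex => /(_ i); rewrite !inE.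
case: pickP => [y hy | none] i /=.
  by rewrite Mx; move: hy; rewrite Mx => /eqP ->.
by move: (none x); rewrite Mx eqxx.
Qed.

Lemma L3 q N d : 0 < q -> A q N 1 d <= C q N d.
Proof.
move=> q0; pose i0 := Ordinal q0.
rewrite /A; apply/bigop.bigmax_leqP => S vS.
case/and3P: vS => S0 /forall_inP wS /forall_inP dS.
pose sym (M : 'M[bool]_(q, N)) : {ffun 'I_N -> 'I_q} := [ffun j => odflt i0 [pick i | M i j]].
have ds M M' : M \in S -> M' \in S -> mx_dist M M' = 2 * qdist (sym M) (sym M').
  move=> MS M'S; rewrite /mx_dist /qdist !cardT_sum.
  rewrite -(pair_big predT predT (fun i j => ((M i j != M' i j) : nat))) /=.
  rewrite exchange_big /= big_distrr /=; apply: eq_bigr => j _.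
  rewrite !ffunE -sum_ne; apply: eq_bigr => i _.
  by rewrite (colw1 i0 (eqP (forallP (wS M MS) j))) (colw1 i0 (eqP (forallP (wS M' M'S) j))).
have injs : {in S &, injective sym}.
  by move=> M M' MS M'S E; apply: dist0; rewrite ds // E /qdist; apply/eqP;
     rewrite muln_eq0 cards_eq0; apply/orP; right; apply/eqP/setP => j; rewrite !inE eqxx.
rewrite -(card_in_imset injs).
rewrite /C; apply: (@bigop.leq_bigmax_cond _ (fun U => validC d U) (fun U => #|U|)).
apply/andP; split.
- case/set0Pn: S0 => v vS; apply/set0Pn; exists (sym v); exact: imset_f.
- apply/forall_inP => x /imsetP [M MS ->]; apply/forall_inP => y /imsetP [M' M'S ->].
  apply/implyP => neq.
  have := dS M MS => /forall_inP /(_ M' M'S) /implyP.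
  rewrite ds // leq_pmul2l //; apply.
  by apply: contraNneq neq => ->.
Qed.

Local Open Scope ring_scope.

Lemma ratle (a b c z : nat) : (0 < b)%N -> (a * c <= z * b)%N ->
  (a%:R / b%:R * c%:R : rat) <= z%:R.
Proof.
move=> b0 h; rewrite mulrAC ler_pdivrMr ?ltr0n // -!natrM ler_nat //.
Qed.

Lemma ratge (a b c z : nat) : (0 < b)%N -> (z * b <= a * c)%N ->
  (z%:R : rat) <= a%:R / b%:R * c%:R.
Proof.
move=> b0 h; rewrite mulrAC ler_pdivlMr ?ltr0n // -!natrM ler_nat //.
Qed.

Lemma ceil_nat (x : rat) (z : nat) : x <= z%:R -> Num.ceil x <= z%:Z.
Proof. by move=> h; rewrite Num.Theory.ceil_le_int -pmulrn. Qed.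

Theorem proposition11 :
  (forall m n d w1 w2 : nat,
     (0 < m)%N -> (0 < n)%N -> (0 < d)%N -> (0 < w1)%N -> (0 < w2)%N ->
     (w1 %| w2)%N -> (w2 %| m)%N ->
     Num.ceil (('C(m * w1 %/ w2, w1) ^ (n * w2 %/ w1))%N%:R
                / ('C(m, w2) ^ n)%N%:R * (A m n w2 d)%:R : rat)
       <= (A (m * w1 %/ w2) (n * w2 %/ w1) w1 d)%:Z)
  /\
  (forall m n w d : nat,
     (0 < m)%N -> (0 < n)%N -> (0 < w)%N -> (0 < d)%N -> (w %| m)%N ->
     ('C(m, w) ^ n)%N%:R / ('C(m * n, w * n))%:R * (B (m * n) (n * w) d)%:R
       <= (A m n w d)%:R :> rat
     /\ (A m n w d)%:R
       <= ('C(m, w) ^ n)%N%:R / ((m %/ w) ^ (n * w))%N%:R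
            * (C (m %/ w) (n * w) d)%:R :> rat).
Proof.
split.
  move=> m n d w1 w2 m0 n0 d0 w10 w20 d12 d2m.
  apply: ceil_nat; apply: ratle.
    by rewrite expn_gt0 bin_gt0 dvdn_leq.
  have [k ek] := dvdnP d12.
  have [c em] := dvdnP d2m; subst m w2.
  have e1 : (c * (k * w1) * w1 %/ (k * w1) = c * w1)%N.
    by rewrite -mulnA (mulnC (k * w1)) mulnA mulnK.
  have e2 : (n * (k * w1) %/ w1 = n * k)%N by rewrite mulnA mulnK.
  have e3 : (c * (k * w1) = k * (c * w1))%N by rewrite mulnCA mulnA.
  rewrite e1 e2 e3.
  exact: (L1 (c * w1) k n w1 d).
move=> m n w d m0 n0 w0 d0 dwm.
have wm : (w <= m)%N by apply: dvdn_leq.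
split.
  apply: ratle; first by rewrite bin_gt0 leq_mul2r wm orbT.
  have h1 := L1 m n 1 w d.
  rewrite !mul1n !expn1 in h1.
  have h2 := L2 (m * n) (n * w) d.
  rewrite (mulnC m n) in h2.
  rewrite (mulnC w n) (mulnC m n).
  apply: (leq_trans _ h1); rewrite leq_mul2l; apply/orP; right.
  exact: h2.
apply: ratge; first by rewrite expn_gt0 divn_gt0 // wm.
have q0 : (0 < m %/ w)%N by rewrite divn_gt0 // wm.
have h1 := L1 (m %/ w) w n 1 d.
rewrite bin1 muln1 (mulnC w (m %/ w)%N) divnK // in h1.
have h3 := L3 (n * w) d q0.
rewrite mulnC; apply: (leq_trans h1); rewrite mulnC leq_mul2l h3 orbT //.
Qed.
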